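(* Let $k,d,r,\delta$ be positive integers with $\delta\le d$, $r \ge 1$, and suppose there exists a systematic $[k+d-1,k,d]$ MDS code over $\mathbb{F}_q$. Then there exists an $(r,\delta)_i$ linear code over $\mathbb{F}_q$ of length $n = k+d-1+\left(\lceil k/r\rceil-1\right)(\delta-1)$, dimension $k$ and minimum distance $d$, i.e. an $(r,\delta)_i$ code attaining $d = n-k+1-\left(\lceil k/r\rceil-1\right)(\delta-1)$ with equality.
   Context: Coordinate $i$ of a linear code $\mathcal{C}$ of length $n$ has locality $(r,\delta)$ if there is $S_i\subseteq[n]$ with $i\in S_i$, $|S_i|\le r+\delta-1$, such that the punctured code $\mathcal{C}|_{S_i}$ (delete coordinates outside $S_i$) has minimum distance at least $\delta$. An $(r,\delta)_i$ code is a systematic $[n,k,d]$ linear code (information symbols in the first $k$ coordinates) in which all $k$ information coordinates have locality $(r,\delta)$. An MDS code is an $[N,K,D]$ code with $D=N-K+1$. *)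

(* Defs.v *)
(* Linear codes over a finite field F are given by generator
   matrices G : 'M[F]_(k, n); the code is the row space of G. *)
From HB Require Import structures.
From mathcomp Require Import all_boot all_order all_algebra.
Set Implicit Arguments. Unset Strict Implicit. Unset Printing Implicit Defensive.
Import GRing.Theory.
Local Open Scope ring_scope.

Definition wt (F : fieldType) (n : nat) (c : 'rV[F]_n) : nat :=
  #|[set j : 'I_n | c 0%R j != 0%R]|.

Definition codeword (F : fieldType) (k n : nat) (G : 'M[F]_(k, n)) (c : 'rV[F]_n) : Prop :=
  (c <= G)%MS.

Definition has_min_dist (F : fieldType) (k n : nat) (G : 'M[F]_(k, n)) (d : nat) : Prop :=
  (exists c, codeword G c /\ c != 0 /\ wt c = d) /\
  (forall c, codeword G c -> c != 0 -> (d <= wt c)%N).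

Definition systematic (F : fieldType) (k n : nat) (G : 'M[F]_(k, n)) : Prop :=
  forall (i : 'I_k) (j : 'I_n), (j < k)%N -> G i j = ((i : nat) == (j : nat))%:R.

(* Coordinate i has locality (r, delta): there is S containing i with
   |S| <= r + delta - 1 such that the punctured code C|_S has minimum distance
   at least delta (every nonzero codeword of C|_S has weight >= delta). *)
Definition has_locality (F : fieldType) (k n : nat) (G : 'M[F]_(k, n))
    (r delta : nat) (i : 'I_n) : Prop :=
  exists S : {set 'I_n},
    [/\ i \in S, (#|S| <= r + delta - 1)%N &
        forall c, codeword G c -> (exists2 j, j \in S & c 0%R j != 0%R) ->
          (delta <= #|[set j in S | c 0%R j != 0%R]|)%N].

Definition systematic_code (F : fieldType) (k n : nat) (G : 'M[F]_(k, n)) (d : nat) : Prop :=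
  [/\ row_free G, systematic G & has_min_dist G d].

Definition rdelta_i_code (F : fieldType) (k n : nat) (G : 'M[F]_(k, n))
    (d r delta : nat) : Prop :=
  systematic_code G d /\
  forall i : 'I_n, (i < k)%N -> has_locality G r delta i.

Definition ceil_div (k r : nat) : nat := ((k + r.-1) %/ r)%N.

(* Main.v *)
Require Import Defs.
From HB Require Import structures.
From mathcomp Require Import all_boot all_order all_algebra.
From mathcomp Require Import zify.
Set Implicit Arguments. Unset Strict Implicit. Unset Printing Implicit Defensive.
Import GRing.Theory.

Section Ar.
Variables (k d r dl : nat).
Hypotheses (k0 : 0 < k) (d0 : 0 < d) (r0 : 0 < r) (dl0 : 0 < dl) (dld : dl <= d).
Let e := dl - 1.
Let m := ceil_div k r.
Let n0 := k + d - 1.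
Let n := n0 + (m - 1) * e.

Definition phiN j := if j < k then j else if j < k + m * e then k + (j - k) %% e
  else j - (m - 1) * e.
Definition keep i j := if (k <= j) && (j < k + m * e) then i %/ r == (j - k) %/ e else true.
Definition Jm i o := if o < k then o else if o < k + e then k + (i %/ r) * e + (o - k)
  else o + (m - 1) * e.

Lemma km : k <= m * r.
Proof.
rewrite /m /ceil_div.
have h := divn_eq (k + r.-1) r. have h2 := ltn_pmod (k + r.-1) r0. lia.
Qed.

Lemma m0 : 0 < m.
Proof. rewrite lt0n; apply/eqP => h; have := km; rewrite h; lia. Qed.

Lemma grp_lt i : i < k -> i %/ r < m.
Proof. move=> ik; rewrite ltn_divLR //; have := km; lia. Qed.

Lemma Jm_lt i o : i < k -> o < n0 -> Jm i o < n.
Proof.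
move=> ik on; rewrite /Jm /n /n0.
have g := grp_lt ik. have m1 := m0.
have : (i %/ r).+1 * e <= m * e by apply: leq_mul.
rewrite mulSn. rewrite mulnBl mul1n.
have ed : e <= d - 1 by rewrite /e; lia.
move=> h; case: ifPn => h1; first lia. case: ifPn => h2; lia.
Qed.


Lemma phiN_lt j : j < n -> phiN j < n0.
Proof.
rewrite /phiN /n /n0 => jn.
have ed : e <= d - 1 by rewrite /e; lia.
case: ifPn => h1; first lia. case: ifPn => h2.
  have e0 : 0 < e by case: (e) h2 h1 => //; rewrite muln0 addn0 => ->.
  have := ltn_pmod (j - k) e0; lia.
have : (m - 1) * e = m * e - e by rewrite mulnBl mul1n.
have : e <= m * e by rewrite leq_pmull // m0.
lia.
Qed.

Lemma phiN_info j : j < k -> phiN j = j.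
Proof. by rewrite /phiN => ->. Qed.

Lemma keep_info i j : j < k -> keep i j.
Proof. by rewrite /keep => jk; rewrite leqNgt jk. Qed.

Lemma key i o j : i < k -> o < n0 -> j < n ->
  (phiN j == o) && keep i j = (j == Jm i o).
Proof.
move=> ik on jn.
have g := grp_lt ik. have m1 := m0.
have : (i %/ r).+1 * e <= m * e by apply: leq_mul.
rewrite mulSn => hx.
have hme : (m - 1) * e = m * e - e by rewrite mulnBl mul1n.
have hem : e <= m * e by rewrite leq_pmull // m0.
have ed : e <= d - 1 by rewrite /e; lia.
rewrite /phiN /keep /Jm.
move: on jn; rewrite /n /n0 => on jn.
move: (i %/ r) g hx => x g hx.
rewrite hme in jn *.
have hM0 : e = 0 -> m * e = 0 by move->; rewrite muln0.
move: (m * e) hx hem jn g hM0 => M hx hem jn g hM0.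
clearbody e m n0 n.
case: ifPn => h1.
  rewrite leqNgt h1 /= andbT.
  case: ifPn => h3 //. case: ifPn => h4; apply/eqP/eqP; lia.
case: ifPn => h2.
  have e0 : 0 < e by rewrite lt0n; apply/eqP => e0; move: (hM0 e0) h2 h1; lia.
  have hq := divn_eq (j - k) e. have hr := ltn_pmod (j - k) e0.
  have kj : k <= j by lia.
  rewrite kj /=.
  case: ifPn => h3.
    have -> : (k + (j - k) %% e == o) = false by apply/negbTE/eqP; lia.
    by apply/esym/negbTE/eqP; lia.
  case: ifPn => h4.
    apply/idP/idP.
      case/andP => /eqP ho /eqP hqx. apply/eqP. rewrite hqx.
      move: hq ho; move: ((j - k) %/ e) ((j - k) %% e) => q rm; lia.
    move/eqP => hj.
    have hjk : j - k = x * e + (o - k) by lia.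
    rewrite hjk divnMDl // (divn_small (_ : o - k < e)); last by lia.
    rewrite modnMDl modn_small; last by lia.
    by rewrite addn0 !eqxx; apply/eqP; lia.
  have -> : (k + (j - k) %% e == o) = false by apply/negbTE/eqP; lia.
  by apply/esym/negbTE/eqP; lia.
rewrite andbF.
rewrite andbT.
case: ifPn => h3; first by apply/eqP/eqP; lia.
case: ifPn => h4; first by apply/eqP/eqP; lia.
by apply/eqP/eqP; lia.
Qed.


Lemma Jm_loc i o : i < k -> k <= o -> o < k + e ->
  [&& k <= Jm i o, Jm i o < k + m * e & (Jm i o - k) %/ e == i %/ r].
Proof.
move=> ik ko oe.
have g := grp_lt ik.
have : (i %/ r).+1 * e <= m * e by apply: leq_mul.
rewrite mulSn => hx.
have e0 : 0 < e by lia.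
rewrite /Jm ltnNge ko /= oe.
move: (i %/ r) g hx => x g hx.
clearbody e m.
have -> : k + x * e + (o - k) - k = x * e + (o - k) by lia.
rewrite divnMDl // divn_small ?addn0 ?eqxx ?andbT; last by lia.
lia.
Qed.

Lemma e_pos j : k <= j -> j < k + m * e -> 0 < e.
Proof. move=> h1 h2; rewrite lt0n; apply/eqP => e0; move: h2; rewrite e0 muln0; lia. Qed.


Lemma cnt1 (a : nat) (A : {set 'I_a}) (s : seq nat) (f : nat -> nat) :
  {in A &, forall x y : 'I_a, f x = f y -> x = y} ->
  (forall x : 'I_a, x \in A -> f x \in s) -> #|A| <= size s.
Proof.
move=> fi fs; rewrite cardE -(size_map (fun x : 'I_a => f x)).
apply: uniq_leq_size.
  rewrite map_inj_in_uniq ?enum_uniq // => x y; rewrite !mem_enum; exact: fi.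
by move=> y /mapP [x]; rewrite mem_enum => xA ->; apply: fs.
Qed.

Lemma cnt2 (a b : nat) (A : {set 'I_a}) (B : {set 'I_b}) (g : nat -> nat) :
  (forall x : 'I_a, x \in A -> exists2 y : 'I_b, y \in B & g y = x) -> #|A| <= #|B|.
Proof.
move=> h; have := @cnt1 a A (map (fun y : 'I_b => g y) (enum B)) id.
rewrite size_map -cardE; apply.
  by move=> x y _ _; apply: val_inj.
move=> x /h [y yB <-]; apply/mapP; exists y => //; by rewrite mem_enum.
Qed.

Local Open Scope ring_scope.
Variable F : fieldType.
Variable G0 : 'M[F]_(k, n0).
Hypothesis hs : systematic G0.
Hypothesis hmd : forall c, codeword G0 c -> c != 0%R -> (d <= wt c)%N.

Definition G0n (i : 'I_k) (t : nat) : F := if insub t is Some o then G0 i o else 0%R.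

Lemma G0nE i (o : 'I_n0) : G0n i o = G0 i o.
Proof.
rewrite /G0n; case: insubP => [o' _ ho|]; first by congr (G0 i _); apply: val_inj.
by move=> /negP []; exact: ltn_ord.
Qed.

Lemma G0n_sys i t : (t < k)%N -> G0n i t = (((i : nat) == t)%:R)%R.
Proof.
move=> tk; rewrite /G0n; case: insubP => [o _ ot|/negP[]].
  by rewrite -ot in tk *; apply: hs.
rewrite /n0; move: tk d0; clear; lia.
Qed.

Definition Gp : 'M[F]_(k, n) :=
  \matrix_(i, j) (if keep i j then G0n i (phiN j) else 0%R).

Lemma sum_uniq (i : 'I_k) (o : 'I_n0) :
  (\sum_(j : 'I_n | phiN j == o) (if keep i j then G0n i (phiN j) else 0%R) = G0 i o)%R.
Proof.
rewrite -big_mkcondr.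
rewrite (eq_bigr (fun _ => G0 i o)); last by move=> j /andP[/eqP -> _]; rewrite G0nE.
rewrite (big_pred1 (Ordinal (Jm_lt (ltn_ord i) (ltn_ord o)))) // => j /=.
by rewrite key.
Qed.

Lemma collapse (u : 'rV[F]_k) (o : 'I_n0) :
  (u *m G0) 0%R o = (\sum_(j : 'I_n | phiN j == o) (u *m Gp) 0%R j)%R.
Proof.
rewrite !mxE.
under [in RHS]eq_bigr do rewrite mxE.
rewrite exchange_big /=.
apply: eq_bigr => i _; rewrite -mulr_sumr; congr (_ * _)%R.
under eq_bigr do rewrite mxE.
by rewrite sum_uniq.
Qed.

Lemma sum_neq0 (I : finType) (P : pred I) (f : I -> F) :
  \sum_(j | P j) f j != 0 -> exists2 j, P j & f j != 0.
Proof.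
move=> h; case: (pickP (fun j => P j && (f j != 0))) => [j /andP[]|none].
  by exists j.
move: h; rewrite big1 ?eqxx // => j Pj; apply/eqP.
by move: (none j) => /=; rewrite Pj /= => /negbFE.
Qed.

Lemma mulG0_info (u : 'rV[F]_k) (o : 'I_n0) (ho : (o < k)%N) :
  (u *m G0) 0 o = u 0 (Ordinal ho).
Proof.
rewrite mxE (bigD1 (Ordinal ho)) //= hs // eqxx mulr1 big1 ?addr0 // => i ne.
by rewrite hs // (negbTE (ne : (i : nat) != o)) mulr0.
Qed.

Lemma Gp_info (i : 'I_k) (j : 'I_n) : (j < k)%N -> Gp i j = ((i : nat) == j)%:R.
Proof. by move=> jk; rewrite mxE keep_info // phiN_info // G0n_sys. Qed.

Lemma Gp_sys : systematic Gp.
Proof. by move=> i j jk; rewrite Gp_info. Qed.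

Lemma Gp_free : row_free Gp.
Proof.
have kn : (k <= n)%N by rewrite /n; apply: (leq_trans _ (leq_addr _ _)); rewrite /n0; move: d0; clear; lia.
pose B : 'M[F]_(n, k) := \matrix_(j, i) ((j : nat) == (i : nat))%:R.
have GB : Gp *m B = 1%:M.
  apply/matrixP => i i'; rewrite !mxE (bigD1 (widen_ord kn i')) //= big1.
    rewrite !mxE eqxx mulr1 addr0. have wk : (widen_ord kn i' < k)%N := ltn_ord i'.
    by rewrite (keep_info _ wk) (phiN_info wk) G0n_sys.
  by move=> j ne; rewrite !mxE (negbTE (ne : (j : nat) != i')) mulr0.
rewrite -row_leq_rank -{1}(mxrank1 F k) -GB; exact: mxrankM_maxl.
Qed.

Lemma Gp_lb c : codeword Gp c -> c != 0 -> (d <= wt c)%N.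
Proof.
move=> /submxP [u ->] cn0.
have [i ui] : exists i, u 0 i != 0.
  case: (pickP (fun i => u 0 i != 0)) => [i ui|h]; first by exists i.
  move: cn0; have -> : u = 0.
    apply/matrixP => a b; rewrite [a]ord1 mxE; apply/eqP.
    by move: (h b) => /negbFE.
  by rewrite mul0mx eqxx.
have iO : (i < n0)%N by rewrite /n0; move: (ltn_ord i) d0; clear; lia.
have c0n : u *m G0 != 0.
  apply/negP => /eqP h0; move: ui.
  have := mulG0_info u (o := Ordinal iO) (ltn_ord i).
  have -> : Ordinal (ltn_ord i) = i by apply: val_inj.
  by rewrite h0 mxE => <-; rewrite eqxx.
apply: (leq_trans (hmd (submxMl _ _) c0n)).
rewrite /wt; apply: (cnt2 (g := phiN)) => o; rewrite inE => h.
rewrite collapse in h. have [j /eqP pj cj] := sum_neq0 h.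
by exists j; rewrite ?inE.
Qed.

Lemma Gp_word : exists c, codeword Gp c /\ c != 0 /\ wt c = d.
Proof.
pose i0 : 'I_k := Ordinal k0.
have np : (0 < n)%N by rewrite /n /n0; apply: (leq_trans _ (leq_addr _ _)); move: d0 k0; clear; lia.
have cn0 : row i0 Gp != 0.
  apply/negP => /eqP h; have := congr1 (fun M : 'rV[F]_n => M 0 (Ordinal np)) h.
  by rewrite mxE Gp_info //= mxE => /eqP; rewrite oner_eq0.
exists (row i0 Gp); split; first exact: row_sub.
split=> //; apply/eqP; rewrite eqn_leq Gp_lb ?row_sub ?andbT //.
have hent j : row i0 Gp 0 j != 0 ->
    keep i0 j /\ ((phiN j == 0%N) || (k <= phiN j)%N).
  rewrite !mxE; case: ifP => kp; last by rewrite eqxx.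
  split => //; case: (ltnP (phiN j) k) => lt; last by rewrite orbT.
  move: H; rewrite G0n_sys //= orbF; case: (eqVneq (phiN j) 0%N) => // _.
  by rewrite mulr0n eqxx.
rewrite /wt -(size_iota 0 d).
apply: (cnt1 (f := fun j => if phiN j == 0%N then 0%N else (phiN j - k + 1)%N)).
  move=> j1 j2; rewrite !inE => /hent [kp1 h1] /hent [kp2 h2] hf.
  have hp : phiN j1 = phiN j2.
    move: hf h1 h2; case: eqP => e1; case: eqP => e2 //=; move: k0; clear -e1 e2; lia.
  have l1 := phiN_lt (ltn_ord j1).
  have := key (o := phiN j1) k0 l1 (ltn_ord j1); rewrite eqxx kp1 => /esym/eqP a1.
  have := key (o := phiN j1) k0 l1 (ltn_ord j2); rewrite hp eqxx kp2 => /esym/eqP a2.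
  by apply: val_inj; rewrite /= a1 a2 hp.
move=> j; rewrite inE => /hent [_ h]; rewrite mem_iota add0n.
have := phiN_lt (ltn_ord j); move: h; rewrite /n0.
case: eqP => _ /=; move: d0 k0; clear; lia.
exact: row_sub.
Qed.

Lemma Gp_loc (i : 'I_n) : (i < k)%N -> has_locality Gp r dl i.
Proof.
move=> ik; set g := (i %/ r)%N.
pose S1 := [set j : 'I_n | (j < k)%N && (j %/ r == g)%N].
pose S2 := [set j : 'I_n | [&& (k <= j)%N, (j < k + m * e)%N & ((j - k) %/ e == g)%N]].
exists (S1 :|: S2); split.
- by rewrite !inE ik eqxx.
- apply: (leq_trans (leq_card_setU _ _).1).
  have -> : (r + dl - 1 = r + e)%N by rewrite /e; move: dl0; clear; lia.
  apply: leq_add.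
    rewrite -[X in (_ <= X)%N](size_iota 0 r); apply: (cnt1 (f := fun j => j %% r)%N).
      move=> j1 j2; rewrite !inE => /andP[_ /eqP h1] /andP[_ /eqP h2] hm.
      by apply: val_inj; rewrite /= (divn_eq j1 r) (divn_eq j2 r) h1 h2 hm.
    by move=> j _; rewrite mem_iota add0n ltn_pmod.
  rewrite -[X in (_ <= X)%N](size_iota 0 e); apply: (cnt1 (f := fun j => (j - k) %% e)%N).
    move=> j1 j2; rewrite !inE => /and3P[a1 b1 /eqP h1] /and3P[a2 b2 /eqP h2] hm.
    apply: val_inj => /=.
    have := divn_eq (j1 - k) e; have := divn_eq (j2 - k) e.
    rewrite h1 h2 hm; move: a1 a2; clear; lia.
  move=> j; rewrite inE => /and3P[a b _]; rewrite mem_iota add0n ltn_pmod //.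
  exact: (e_pos a b).
move=> c /submxP [u ->] [j0 j0S cj0].
pose v : 'rV[F]_k := \row_(i' < k) (if (i' %/ r == g)%N then u 0 i' else 0).
pose w := v *m G0.
pose wn t := \sum_(i' < k) v 0 i' * G0n i' t.
have hw (o : 'I_n0) : w 0 o = wn o.
  by rewrite mxE; apply: eq_bigr => i' _; rewrite G0nE.
have hS j : j \in S1 :|: S2 -> (u *m Gp) 0 j = wn (phiN j).
  rewrite !inE => /orP[/andP[jk /eqP jg]|/and3P[kj jl /eqP jg]];
    rewrite mxE; apply: eq_bigr => i' _; rewrite !mxE.
    rewrite (keep_info _ jk) (phiN_info jk).
    case: eqP => [//|ne]; rewrite G0n_sys //.
    have : (i' : nat) != j by apply/eqP => e'; apply: ne; rewrite e' jg.
    by move/negbTE => ->; rewrite mulr0 mul0r.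
  rewrite /keep kj jl /= jg.
  by case: ifP; rewrite ?mulr0 ?mul0r.
pose j0' : 'I_n0 := Ordinal (phiN_lt (ltn_ord j0)).
have wn0 : w != 0.
  apply/negP => /eqP h; move: cj0; rewrite hS //.
  by rewrite -[phiN j0]/(val j0') -hw h mxE eqxx.
have hdw := hmd (submxMl v G0) wn0.
pose Gl := [set o : 'I_n0 | (k + e <= o)%N].
rewrite /wt -(cardsID Gl) in hdw.
set W := [set j | w 0 j != 0] in hdw.
have h1 : (#|W :&: Gl| <= d - dl)%N.
  rewrite -(size_iota 0 (d - dl)); apply: (cnt1 (f := fun o => o - (k + e))%N).
    move=> o1 o2; rewrite !inE => /andP[_ a1] /andP[_ a2] hm.
    apply: val_inj => /=; move: hm a1 a2; clear; lia.
  move=> o; rewrite !inE => /andP[_ a]; rewrite mem_iota add0n.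
  have on : (o < k + d - 1)%N := ltn_ord o. have ee : e = (dl - 1)%N := erefl.
  move: a dld dl0 on ee; clear; lia.
have h2 : (#|W :\: Gl| <= #|[set j in S1 :|: S2 | (u *m Gp) 0%R j != 0%R]|)%N.
  apply: (cnt2 (g := phiN)) => o; rewrite !inE => /andP[nG wo].
  have oe : (o < k + e)%N by rewrite ltnNge.
  have Jl := Jm_lt ik (ltn_ord o).
  pose j := Ordinal Jl.
  have := key ik (ltn_ord o) Jl; rewrite eqxx => /andP[/eqP pj _].
  have jS : j \in S1 :|: S2.
    rewrite !inE /=; case: (ltnP o k) => ok.
      have : (Jm i o = o) by rewrite /Jm ok.
      move=> ->; rewrite ok /=.
      move: wo; rewrite (mulG0_info _ ok) mxE; case: ifP => //; by rewrite eqxx.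
    by rewrite Jm_loc ?orbT.
  exists j; last by [].
  by rewrite inE jS /= hS // pj -hw.
apply: (leq_trans _ h2); move: hdw h1 dld; clear; lia.
Qed.

End Ar.

Theorem mainTheorem6 (F : finFieldType) (k d r delta : nat) :
  (0 < k)%N -> (0 < d)%N -> (0 < r)%N -> (0 < delta)%N -> (delta <= d)%N ->
  (exists G : 'M[F]_(k, k + d - 1), systematic_code G d) ->
  exists G : 'M[F]_(k, k + d - 1 + (ceil_div k r - 1) * (delta - 1)),
    rdelta_i_code G d r delta.
Proof.
move=> k0 d0 r0 dl0 dld [G0 [_ hs [_ hmd]]].
exists (Gp r delta G0); split.
  split.
  - exact: Gp_free.
  - exact: Gp_sys.
  - split; first exact: (Gp_word k0 d0 r0 dl0 dld hs hmd).
    exact: (Gp_lb k0 d0 r0 dl0 dld hs hmd).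
move=> i ik; exact: (Gp_loc k0 d0 r0 dl0 dld hs hmd ik).
Qed.
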